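(* Let $c>0$. Suppose that for every $d$ that is a power of $2$ we are given a nonsingular $d\times d$ matrix $A=A_d$ with all entries in $\{+1,-1\}$ such that the matrix $B:=2^dA^{-1}$ is integral, has nonnegative row sums, and every entry of the first row of $B$ is nonnegative and has absolute value at least $(cd)^{d/2}$. Then there is a constant $c'>0$ (depending only on $c$) such that for every such $d$ and every integral vector $b\in\mathbb{Z}^d$ with $b>0$, the unique solution $z$ of $Az=b$ has first component satisfying $z_1>0$ and $|z_1|\ge (c'd)^{d/2}$.
   Context: For $x\in\mathbb{R}^n$, the notation $x>0$ means that all entries of $x$ are nonnegative and $x\neq 0$. (In the paper, a quantity $Q=Q(d)$ is called ''large'' if there is a constant $c>0$ with $|Q|\ge (cd)^{d/2}$ for all considered $d$; the hypotheses and conclusion above spell this out.) *)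

(* Defs.v *)
From mathcomp Require Import all_boot all_order all_algebra.
From mathcomp Require Import reals.
Set Implicit Arguments. Unset Strict Implicit. Unset Printing Implicit Defensive.
Import Order.TTheory GRing.Theory Num.Theory.
Local Open Scope ring_scope.

Lemma pow2_gt0 (k : nat) : (0 < 2 ^ k)%N.
Proof. by rewrite expn_gt0. Qed.

(* The first index of 'I_(2^k) (row/column number 1 in the paper). *)
Definition first_idx (k : nat) : 'I_(2 ^ k) := Ordinal (pow2_gt0 k).

Definition good_matrix (R : realType) (c : R) (k : nat) (A : 'M[R]_(2 ^ k)) : Prop :=
  let d := (2 ^ k)%N in
  let B := (2%:R ^+ d) *: invmx A in
  [/\ (forall i j, A i j = 1 \/ A i j = -1),
      A \in unitmx,
      (forall i j, B i j \is a Num.int),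
      (forall i, 0 <= \sum_j B i j) &
      (forall j, 0 <= B (first_idx k) j /\
                 Num.sqrt (c * d%:R) ^+ d <= `|B (first_idx k) j|)].

(* Main.v *)
Require Import Defs.
From mathcomp Require Import all_boot all_order all_algebra.
From mathcomp Require Import reals.
Import Order.TTheory GRing.Theory Num.Theory.
Local Open Scope ring_scope.

Theorem mainTheorem4 (R : realType) (c : R) (hc : 0 < c) :
  exists c' : R, 0 < c' /\
  forall A : forall k : nat, 'M[R]_(2 ^ k),
    (forall k, good_matrix c (A k)) ->
    forall (k : nat) (b z : 'cV[R]_(2 ^ k)),
      (forall i, b i 0 \is a Num.int) ->
      (forall i, 0 <= b i 0) -> b != 0 ->
      A k *m z = b ->
      0 < z (first_idx k) 0 /\
      Num.sqrt (c' * (2 ^ k)%:R) ^+ (2 ^ k) <= `|z (first_idx k) 0|.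
Proof.
exists (c / 4); split; first by rewrite divr_gt0.
move=> A hA k b z hint hpos hb0 hAz.
have [_ hU _ _ hrow] := hA k.
set d := (2 ^ k)%N in hrow hU hAz *.
set f := first_idx k.
set Bm := (2%:R ^+ d *: invmx (A k)) in hrow.
have [i0 hi0] : exists i, b i 0 != 0.
  apply/existsP; apply: contraR hb0 => /existsPn H; apply/eqP/matrixP => i j.
  by rewrite (ord1 j) mxE; move: (H i); rewrite negbK => /eqP.
have hb1 : 1 <= b i0 0.
  have := hint i0; rewrite (intrEge0 (hpos i0)) => /natrP [n hn].
  rewrite hn in hi0 *; rewrite ler1n lt0n; apply: contraNneq hi0 => ->.
  by [].
have hz : z = invmx (A k) *m b by rewrite -hAz mulKmx.
have h2 : (0 : R) < 2%:R ^+ d by rewrite exprn_gt0.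
set S := \sum_j Bm f j * b j 0.
have hS : S = 2%:R ^+ d * z f 0.
  rewrite hz mxE mulr_sumr; apply: eq_bigr => j _; rewrite /Bm mxE mulrA.
  by [].
have hsq0 : 0 <= Num.sqrt (c * d%:R) ^+ d by rewrite exprn_ge0 // sqrtr_ge0.
have hge : Num.sqrt (c * d%:R) ^+ d <= S.
  rewrite /S (bigD1 i0) //=.
  have [hB0 hB1] := hrow i0.
  apply: (le_trans _ (_ : Bm f i0 * b i0 0 <= _)).
    apply: (le_trans hB1); rewrite ger0_norm //.
    by rewrite -{1}(mulr1 (Bm f i0)) ler_wpM2l.
  rewrite lerDl; apply: sumr_ge0 => j _; apply: mulr_ge0 => //.
  by have [] := hrow j.
have hsqpos : 0 < Num.sqrt (c * d%:R) ^+ d.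
  rewrite exprn_gt0 // sqrtr_gt0 mulr_gt0 // ltr0n expn_gt0 //.
have hzf : z f 0 = S / 2%:R ^+ d.
  by rewrite hS (mulrC (2%:R ^+ d)) mulfK // gt_eqF.
have hzpos : 0 < z f 0 by rewrite hzf divr_gt0 // (lt_le_trans hsqpos hge).
split => //.
rewrite gtr0_norm // hzf.
have -> : c / 4 * d%:R = (c * d%:R) * (2^-1) ^+ 2.
  by rewrite exprVn -natrX mulrAC.
rewrite sqrtrM; last by rewrite mulr_ge0 // ltW.
rewrite sqrtr_sqr exprMn ger0_norm; last by rewrite invr_ge0.
by rewrite exprVn ler_pM2r ?invr_gt0.
Qed.
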